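(* Let $m\in\mathbb N$. Suppose $a>0$ is such that for every $u\in H^1(\mathbb B^2)$ with $\int_{\mathbb S^1}e^u\,p\,d\mu_{\mathbb S^1}=0$ for all $p\in\mathring{\mathcal P}_m$, $$a\int_{\mathbb B^2}|\nabla u|^2dx\ge\log\Big(\frac1{2\pi}\int_{\mathbb S^1}e^{u-\bar u}d\mu_{\mathbb S^1}\Big),\qquad\bar u=\frac1{2\pi}\int_{\mathbb S^1}u\,d\mu_{\mathbb S^1}.$$ Then $a\ge\frac{1}{4\pi(m+1)}$.
   Context: $\mathbb B^2$ is the open unit disk, $\mathbb S^1$ its boundary with arclength measure $\mu_{\mathbb S^1}$; $u$ on $\mathbb S^1$ denotes the trace. $\mathcal P_m$ denotes the polynomials on $\mathbb R^2$ of degree at most $m$, and $\mathring{\mathcal P}_m=\{p\in\mathcal P_m:\int_{\mathbb S^1}p\,d\mu_{\mathbb S^1}=0\}$. *)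

(* Defs.v *)
From Stdlib Require Import Reals.
From Coquelicot Require Import Coquelicot.
Open Scope R_scope.

Definition dx (u : R -> R -> R) (x y : R) : R := Derive (fun t => u t y) x.
Definition dy (u : R -> R -> R) (x y : R) : R := Derive (fun t => u x t) y.

(* u is C^1 on R^2: partial derivatives exist everywhere and are (jointly)
   continuous. Such u restrict to H^1(B^2) functions whose trace is u|_{S^1}. *)
Definition C1_plane (u : R -> R -> R) : Prop :=
  forall x y,
    ex_derive (fun t => u t y) x /\ ex_derive (fun t => u x t) y /\
    continuity_2d_pt (dx u) x y /\ continuity_2d_pt (dy u) x y.

Definition circ_int (f : R -> R -> R) : R :=
  RInt (fun t => f (cos t) (sin t)) 0 (2 * PI).

(* Integral over the open unit disk B^2 (Lebesgue measure), written as an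
   iterated integral (integrands used below are continuous on the closed disk). *)
Definition disk_int (f : R -> R -> R) : R :=
  RInt (fun x => RInt (fun y => f x y) (- sqrt (1 - x ^ 2)) (sqrt (1 - x ^ 2))) (-1) 1.

Definition dirichlet (u : R -> R -> R) : R :=
  disk_int (fun x y => (dx u x y) ^ 2 + (dy u x y) ^ 2).

Definition bmean (u : R -> R -> R) : R := / (2 * PI) * circ_int u.

Definition is_poly_deg (m : nat) (p : R -> R -> R) : Prop :=
  exists c : nat -> nat -> R, forall x y,
    p x y = sum_f_R0 (fun i => sum_f_R0 (fun j => c i j * x ^ i * y ^ j) (m - i)) m.

Definition in_P0 (m : nat) (p : R -> R -> R) : Prop :=
  is_poly_deg m p /\ circ_int p = 0.

(* Main.v *)
Require Import Defs.
From Stdlib Require Import Reals.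
From Coquelicot Require Import Coquelicot.
From Stdlib Require Import Lra Lia Psatz FunctionalExtensionality.
Open Scope R_scope.

Lemma exp2_sign x : 0 <= x * (exp x - 1 - x - x^2/2).
Proof.
  destruct (MVT_gen (fun t => exp t - 1 - t - t^2/2) 0 x (fun t => exp t - 1 - t)) as [c [Hc He]].
  - intros t _. auto_derive; [auto|]. field.
  - intros t _. apply derivable_continuous_pt. reg.
  - cbv beta in He. rewrite exp_0 in He.
    pose proof (exp_ineq1_le c).
    assert (E: exp x - 1 - x - x^2/2 = (exp c - 1 - c) * x) by (simpl in *; lra).
    rewrite E. nra.
Qed.

Lemma exp3 x : 1 + x + x^2/2 + x^3/6 <= exp x.
Proof.
  destruct (MVT_gen (fun t => exp t - 1 - t - t^2/2 - t^3/6) 0 x (fun t => exp t - 1 - t - t^2/2)) as [c [Hc He]].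
  - intros t _. auto_derive; [auto|]. field.
  - intros t _. apply derivable_continuous_pt. reg.
  - cbv beta in He. rewrite exp_0 in He.
    pose proof (exp2_sign c).
    assert (0 <= (exp c - 1 - c - c^2/2) * x).
    { unfold Rmin, Rmax in Hc. destruct (Rle_dec 0 x); destruct Hc.
      - destruct (Rle_lt_or_eq_dec 0 c H0). 
        + assert (0 <= exp c - 1 - c - c^2/2). { apply Rmult_le_reg_l with c; auto. lra. }
          nra.
        + subst. rewrite exp_0. simpl. lra.
      - destruct (Rle_lt_or_eq_dec c 0 H1).
        + assert (exp c - 1 - c - c^2/2 <= 0). { apply Rmult_le_reg_l with (-c); lra. }
          nra.
        + subst. rewrite exp_0. simpl. lra. }
    simpl in *. lra.
Qed.

Fixpoint G (n:nat) (x y : R) : R :=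
  match n with
  | O => y
  | S n' => (y * (x^2+y^2)^n + 2*INR n * x^2 * G n' x y) / (2*INR n + 1)
  end.

Lemma INR_pos1 n : 0 < 2 * INR n + 1.
Proof. pose proof (pos_INR n). lra. Qed.

Lemma dG_y n x y : is_derive (fun t => G n x t) y ((x^2+y^2)^n).
Proof.
  revert y. induction n as [|n IH]; intros y.
  - simpl. auto_derive; auto. 
  - cbn [G]. pose proof (INR_pos1 (S n)).
    auto_derive.
    + eexists; apply IH.
    + replace (Derive (fun x0 => G n x x0) y) with ((x^2+y^2)^n) by (symmetry; apply is_derive_unique; apply IH).
      change (match n with 0%nat => 1 | S _ => INR n + 1 end) with (INR (S n)).
      replace (x*(x*1)+y*(y*1)) with (x^2+y^2) by ring.
      change ((x^2+y^2)^S n) with ((x^2+y^2) * (x^2+y^2)^n).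
      rewrite S_INR in *. field. lra.
Qed.


Definition g n t := G n (sin t) (cos t).

Lemma sc1 t : sin t ^ 2 + cos t ^ 2 = 1.
Proof. rewrite <- (sin2_cos2 t). unfold Rsqr. ring. Qed.

Lemma s2 t : sin t ^ 2 = 1 - cos t ^ 2.
Proof. pose proof (sc1 t). lra. Qed.
Lemma s3 t : sin t ^ 3 = sin t - sin t * cos t ^ 2.
Proof. replace (sin t ^ 3) with (sin t * sin t ^ 2) by ring. rewrite s2. ring. Qed.
Lemma s4 t : sin t ^ 4 = (1 - cos t ^ 2)^2.
Proof. replace (sin t ^ 4) with ((sin t ^ 2)^2) by ring. rewrite s2. ring. Qed.

Ltac trig_ring t :=
  ring_simplify; try rewrite (s4 t); try rewrite (s3 t); try rewrite (s2 t); ring.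

Lemma g_rec n t : g (S n) t = (cos t + 2*INR (S n)*sin t^2*g n t)/(2*INR (S n)+1).
Proof. unfold g. cbn [G]. rewrite sc1, pow1. unfold g. field. apply Rgt_not_eq, INR_pos1. Qed.

Lemma dg n t : is_derive (g (S n)) t (sin t*(2*INR (S n)*cos t*g n t - 1)).
Proof.
  revert t. induction n as [|n IH]; intros t.
  - apply is_derive_ext with (fun t => (cos t + 2*INR 1*sin t^2*g 0 t)/(2*INR 1+1)).
    { intros; symmetry; apply g_rec. }
    unfold g. simpl G. auto_derive; auto.
    pose proof (sc1 t). simpl. field_simplify_eq. trig_ring t.
  - apply is_derive_ext with (fun t => (cos t + 2*INR (S (S n))*sin t^2*g (S n) t)/(2*INR (S (S n))+1)).
    { intros; symmetry; apply g_rec. }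
    pose proof (INR_pos1 (S (S n))).
    auto_derive.
    + eexists; apply IH.
    + change (match n with 0%nat => 1 | S _ => INR n + 1 end) with (INR (S n)).
      replace (Derive (fun x => g (S n) x) t) with (sin t*(2*INR (S n)*cos t*g n t - 1)) by (symmetry; apply is_derive_unique; apply IH).
      rewrite (g_rec n t).
      pose proof (sc1 t). pose proof (INR_pos1 (S n)). 
      rewrite !S_INR in *. field_simplify_eq; try lra. trig_ring t.
Qed.

Lemma d_sing n t : is_derive (fun t => sin t * g n t) t ((2*INR n+2)*cos t*g n t - 1).
Proof.
  destruct n as [|n].
  - unfold g; simpl G. auto_derive; auto. change (INR 0) with 0. trig_ring t.
  - pose proof (INR_pos1 (S n)).
    auto_derive.
    + eexists; apply dg.
    + replace (Derive (fun x => g (S n) x) t) with (sin t*(2*INR (S n)*cos t*g n t - 1)) by (symmetry; apply is_derive_unique; apply dg).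
      rewrite (g_rec n t). field_simplify_eq; try lra. trig_ring t.
Qed.

Lemma G_y0 n x : G n x 0 = 0.
Proof. induction n; cbn [G]; [auto|]. rewrite IHn. field. apply Rgt_not_eq, INR_pos1. Qed.

Lemma G_odd n x y : G n x (-y) = - G n x y.
Proof.
  induction n; cbn [G]; [auto|]. rewrite IHn. replace ((-y)^2) with (y^2) by ring.
  field. apply Rgt_not_eq, INR_pos1.
Qed.

Lemma g_pi2 n : g n (PI/2) = 0 /\ g n (-(PI/2)) = 0.
Proof. unfold g. rewrite cos_neg, cos_PI2. split; apply G_y0. Qed.

Lemma ex_derive_g n t : ex_derive (g n) t.
Proof. destruct n. - unfold g; simpl. auto_derive; auto. - eexists; apply dg. Qed.

Lemma outer_int n : is_RInt (fun t => 2 * cos t * g n t) (-(PI/2)) (PI/2) (PI/(INR n+1)).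
Proof.
  assert (Hn := pos_INR n).
  assert (E: PI/(INR n+1) = minus ((fun t => 2/(2*INR n+2) * (sin t * g n t + t)) (PI/2))
                                  ((fun t => 2/(2*INR n+2) * (sin t * g n t + t)) (-(PI/2)))).
  { destruct (g_pi2 n) as [A B]. simpl. rewrite A, B. unfold minus, plus, opp; simpl. field. lra. }
  rewrite E. apply (is_RInt_derive (fun t => 2/(2*INR n+2) * (sin t * g n t + t))).
  - intros x _.
    replace (2 * cos x * g n x) with (2/(2*INR n+2) * (((2*INR n+2)*cos x*g n x - 1) + 1)) by (field; lra).
    apply is_derive_scal. apply (is_derive_plus (fun t => sin t * g n t) (fun t => t)).
    + apply d_sing.
    + exact (is_derive_id (K:=R_AbsRing) x).
  - intros x _. apply (ex_derive_continuous (K:=R_AbsRing) (V:=R_NormedModule) (fun t => 2*cos t*g n t)). auto_derive. apply ex_derive_g.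
Qed.

Lemma cm (f h : R -> R) (x:R) : continuous f x -> continuous h x -> continuous (fun t => f t * h t) x.
Proof. intros A B. exact (continuous_mult (U:=R_UniformSpace) (K:=R_AbsRing) f h x A B). Qed.
Lemma cp (f h : R -> R) (x:R) : continuous f x -> continuous h x -> continuous (fun t => f t + h t) x.
Proof. intros A B. exact (continuous_plus (U:=R_UniformSpace) (K:=R_AbsRing) (V:=R_NormedModule) f h x A B). Qed.
Lemma copp (f : R -> R) (x:R) : continuous f x -> continuous (fun t => - f t) x.
Proof. intros A. exact (continuous_opp (U:=R_UniformSpace) (K:=R_AbsRing) (V:=R_NormedModule) f x A). Qed.
Lemma cc (c x : R) : continuous (fun _ : R => c) x.
Proof. exact (continuous_const (U:=R_UniformSpace) (V:=R_UniformSpace) c x). Qed.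
Lemma cid (x : R) : continuous (fun t : R => t) x.
Proof. exact (continuous_id (U:=R_UniformSpace) x). Qed.

Lemma cpow (f : R -> R) (x:R) k : continuous f x -> continuous (fun t => f t ^ k) x.
Proof. intros A. induction k; simpl. apply cc. apply cm; auto. Qed.

Lemma G_cont n (f1 f2 : R -> R) (x:R) : continuous f1 x -> continuous f2 x -> continuous (fun t => G n (f1 t) (f2 t)) x.
Proof.
  intros A B. induction n; cbn [G]; auto.
  unfold Rdiv. apply cm; [|apply cc]. apply cp.
  - apply cm; auto. apply cpow. apply cp; apply cpow; auto.
  - apply cm; auto. apply cm; [apply cc|apply cpow; auto].
Qed.

Definition Phi n x := G n x (sqrt (1 - x^2)) - G n x (- sqrt (1 - x^2)).

Lemma Phi_cont n x : continuous (Phi n) x.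
Proof.
  unfold Phi. unfold Rminus. apply cp.
  - apply G_cont. apply cid. apply continuous_sqrt_comp. apply cp. apply cc.
    apply copp. apply cpow, cid.
  - apply copp. apply G_cont. apply cid. apply copp. apply continuous_sqrt_comp. apply cp. apply cc.
    apply copp. apply cpow, cid.
Qed.

Lemma inner n x : RInt (fun y => (x^2+y^2)^n) (- sqrt(1-x^2)) (sqrt(1-x^2)) = Phi n x.
Proof.
  apply is_RInt_unique.
  replace (Phi n x) with (minus (G n x (sqrt(1-x^2))) (G n x (- sqrt(1-x^2)))) by reflexivity.
  apply (is_RInt_derive (fun y => G n x y)).
  - intros y _. apply dG_y.
  - intros y _. apply cpow. apply cp. apply cc. apply cpow, cid.
Qed.

Lemma Phi_int n : RInt (Phi n) (-1) 1 = PI/(INR n+1).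
Proof.
  assert (C := is_RInt_comp (Phi n) sin cos (-(PI/2)) (PI/2)
     (fun x _ => Phi_cont n (sin x)) (fun x _ => conj (is_derive_sin x) (continuous_cos x))).
  rewrite sin_neg, sin_PI2 in C.
  assert (D := outer_int n).
  apply is_RInt_ext with (g := fun y => scal (cos y) (Phi n (sin y))) in D.
  - transitivity (RInt (fun y => scal (cos y) (Phi n (sin y))) (-(PI/2)) (PI/2)).
    + symmetry; apply is_RInt_unique; exact C.
    + apply is_RInt_unique; exact D.
  - intros x Hx. rewrite Rmin_left in Hx by (pose proof PI_RGT_0; lra).
    rewrite Rmax_right in Hx by (pose proof PI_RGT_0; lra).
    unfold scal; simpl; unfold mult; simpl. unfold Phi.
    replace (1 - sin x ^2) with (cos x ^2) by (rewrite s2; ring).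
    rewrite sqrt_pow2 by (apply cos_ge_0; lra).
    rewrite G_odd. unfold g. ring.
Qed.

Fixpoint P (n:nat) (x y : R) : R :=
  match n with O => 1 | S n' => x * P n' x y - y * Q n' x y end
with Q (n:nat) (x y : R) : R :=
  match n with O => 0 | S n' => x * Q n' x y + y * P n' x y end.

Lemma PQ_circ n t : P n (cos t) (sin t) = cos (INR n * t) /\ Q n (cos t) (sin t) = sin (INR n * t).
Proof.
  induction n as [|n [IH1 IH2]].
  - simpl. rewrite Rmult_0_l, cos_0, sin_0. auto.
  - cbn [P Q]. rewrite IH1, IH2, S_INR.
    replace ((INR n + 1) * t) with (INR n * t + t) by ring.
    rewrite cos_plus, sin_plus. split; ring.
Qed.

Lemma PQ_norm n x y : P n x y ^2 + Q n x y ^2 = (x^2+y^2)^n.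
Proof.
  induction n as [|n IH]. - simpl. ring.
  - change ((x^2+y^2)^S n) with ((x^2+y^2)*(x^2+y^2)^n). rewrite <- IH. cbn [P Q]. ring.
Qed.

Lemma Hlin (f1 f2 : R -> R) (a b : R -> R) x d1 d2 da db :
  is_derive f1 x d1 -> is_derive f2 x d2 -> is_derive a x da -> is_derive b x db ->
  is_derive (fun t => a t * f1 t + b t * f2 t) x (da * f1 x + a x * d1 + db * f2 x + b x * d2).
Proof.
  intros A B C D. auto_derive.
  - repeat split; eexists; eauto.
  - replace (Derive (fun x => f1 x) x) with d1 by (symmetry; apply is_derive_unique; exact A).
    replace (Derive (fun x => f2 x) x) with d2 by (symmetry; apply is_derive_unique; exact B).
    replace (Derive (fun x => a x) x) with da by (symmetry; apply is_derive_unique; exact C).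
    replace (Derive (fun x => b x) x) with db by (symmetry; apply is_derive_unique; exact D). ring.
Qed.

Lemma der_ext (f g : R -> R) x l1 l2 : (forall t, f t = g t) -> l1 = l2 -> is_derive f x l1 -> is_derive g x l2.
Proof. intros E L H. subst. eapply is_derive_ext; eauto. Qed.

Lemma PQ_deriv n x y :
  is_derive (fun t => P (S n) t y) x (INR (S n) * P n x y) /\
  is_derive (fun t => Q (S n) t y) x (INR (S n) * Q n x y) /\
  is_derive (fun t => P (S n) x t) y (-(INR (S n) * Q n x y)) /\
  is_derive (fun t => Q (S n) x t) y (INR (S n) * P n x y).
Proof.
  revert x y. induction n as [|n IH]; intros x y.
  - cbn [P Q]. split; [|split; [|split]]; auto_derive; auto; simpl; ring.
  - destruct (IH x y) as [A [B [C D]]].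
    assert (Di : is_derive (fun t : R => t) x 1) by (auto_derive; auto).
    assert (Dy : is_derive (fun t : R => t) y 1) by (auto_derive; auto).
    assert (Dn : is_derive (fun t : R => -t) y (-1)) by (auto_derive; auto).
    assert (Kx : forall c : R, is_derive (fun _ : R => c) x 0) by (intros; auto_derive; auto).
    assert (Ky : forall c : R, is_derive (fun _ : R => c) y 0) by (intros; auto_derive; auto).
    split; [|split; [|split]].
    + eapply der_ext; [| |eapply (Hlin _ _ (fun t => t) (fun _ => -y)); [exact A|exact B|exact Di|apply Kx]].
      * intros; cbn [P]; ring.
      * cbv beta. match goal with |- ?a = ?b => change (@eq R a b) end. change (INR (S (S n))) with (INR (S n) + 1). cbn [P Q]. ring.
    + eapply der_ext; [| |eapply (Hlin _ _ (fun t => t) (fun _ => y)); [exact B|exact A|exact Di|apply Kx]].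
      * intros; cbn [Q]; ring.
      * cbv beta. match goal with |- ?a = ?b => change (@eq R a b) end. change (INR (S (S n))) with (INR (S n) + 1). cbn [P Q]. ring.
    + eapply der_ext; [| |eapply (Hlin _ _ (fun _ => x) (fun t => -t)); [exact C|exact D|apply Ky|exact Dn]].
      * intros; cbn [P]; ring.
      * cbv beta. match goal with |- ?a = ?b => change (@eq R a b) end. change (INR (S (S n))) with (INR (S n) + 1). cbn [P Q]. ring.
    + eapply der_ext; [| |eapply (Hlin _ _ (fun _ => x) (fun t => t)); [exact D|exact C|apply Ky|exact Dy]].
      * intros; cbn [Q]; ring.
      * cbv beta. match goal with |- ?a = ?b => change (@eq R a b) end. change (INR (S (S n))) with (INR (S n) + 1). cbn [P Q]. ring.
Qed.

Ltac toR := match goal with |- ?a = ?b => change (@eq R a b) end.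

Lemma ccomp (f g : R -> R) (x : R) : continuous f x -> continuous g (f x) -> continuous (fun t => g (f t)) x.
Proof. intros A B. exact (continuous_comp (U:=R_UniformSpace) (V:=R_UniformSpace) (W:=R_UniformSpace) f g x A B). Qed.
Lemma clin (f : R -> R) u v : (forall t, continuous f t) -> forall t, continuous (fun y => f (u*y+v)) t.
Proof. intros H t. apply (ccomp (fun y => u*y+v) f). apply cp. apply cm. apply cc. apply cid. apply cc. apply H. Qed.

Ltac foldINR := repeat match goal with |- context [match ?l with 0%nat => 1 | S _ => INR ?l + 1 end] =>
   change (match l with 0%nat => 1 | S _ => INR l + 1 end) with (INR (S l)) end.

Lemma exRI (f : R -> R) a b : (forall t, continuous f t) -> ex_RInt f a b.
Proof. intros H. apply (ex_RInt_continuous (V:=R_CompleteNormedModule)). intros; apply H. Qed.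

Lemma Rplus_RInt (f : R -> R) a b c : (forall t, continuous f t) -> RInt f a b + RInt f b c = RInt f a c.
Proof. intros H. apply (RInt_Chasles (V:=R_CompleteNormedModule)); apply exRI; auto. Qed.

Lemma swapR (f : R -> R) a b : (forall t, continuous f t) -> RInt f b a = - RInt f a b.
Proof. intros H. rewrite <- (opp_RInt_swap (V:=R_CompleteNormedModule)) by (apply exRI; auto). reflexivity. Qed.

Lemma linR (f : R -> R) u v a b : (forall t, continuous f t) ->
  RInt (fun y => u * f (u * y + v)) a b = RInt f (u*a+v) (u*b+v).
Proof. intros H. apply (RInt_comp_lin (V:=R_CompleteNormedModule)). apply exRI; auto. Qed.

Lemma scalR (f : R -> R) a b c : (forall t, continuous f t) -> RInt (fun y => c * f y) a b = c * RInt f a b.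
Proof. intros H. apply (RInt_scal (V:=R_CompleteNormedModule)). apply exRI; auto. Qed.

Lemma plusR (f g : R -> R) a b : (forall t, continuous f t) -> (forall t, continuous g t) ->
  RInt (fun y => f y + g y) a b = RInt f a b + RInt g a b.
Proof. intros H H'. apply (RInt_plus (V:=R_CompleteNormedModule)); apply exRI; auto. Qed.

Lemma extR (f g : R -> R) a b : (forall t, f t = g t) -> RInt f a b = RInt g a b.
Proof. intros H. apply RInt_ext. intros; auto. Qed.

Lemma shift_int (f : R -> R) c : (forall t, continuous f t) -> (forall t, f (t + 2*PI) = f t) ->
  RInt (fun t => f (t + c)) 0 (2*PI) = RInt f 0 (2*PI).
Proof.
  intros Hc Hp.
  rewrite (extR _ (fun y => 1 * f (1 * y + c))) by (intros; rewrite !Rmult_1_l; reflexivity).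
  rewrite linR by auto.
  replace (1*0+c) with c by ring. replace (1*(2*PI)+c) with (2*PI+c) by ring.
  rewrite <- (Rplus_RInt f c 0 (2*PI+c)) by auto.
  rewrite <- (Rplus_RInt f 0 (2*PI) (2*PI+c)) by auto.
  assert (E: RInt f (2*PI) (2*PI+c) = RInt f 0 c).
  { transitivity (RInt (fun y => 1 * f (1*y + 2*PI)) 0 c).
    - rewrite linR by auto. f_equal; ring.
    - apply extR. intros t. rewrite !Rmult_1_l. apply Hp. }
  rewrite E, (swapR f 0 c) by auto. toR; ring.
Qed.

Lemma refl_int (f : R -> R) : (forall t, continuous f t) ->
  RInt (fun t => f (2*PI - t)) 0 (2*PI) = RInt f 0 (2*PI).
Proof.
  intros Hc.
  rewrite (extR _ (fun y => -1 * (-1 * f (-1 * y + 2*PI)))) by (intros; replace (-1*t+2*PI) with (2*PI-t) by ring; ring).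
  assert (Hc' : forall t, continuous (fun y => -1 * f (-1 * y + 2 * PI)) t).
  { intros t. apply cm. apply cc. apply (clin f). auto. }
  rewrite scalR by auto. rewrite linR by auto.
  replace (-1*0+2*PI) with (2*PI) by ring. replace (-1*(2*PI)+2*PI) with 0 by ring.
  rewrite swapR by auto. toR; ring.
Qed.

Lemma cder (f : R -> R) : (forall t, ex_derive f t) -> forall t, continuous f t.
Proof. intros H t. apply (ex_derive_continuous (K:=R_AbsRing) (V:=R_NormedModule) f). apply H. Qed.

Lemma sin_2lPI l : sin (INR l * (2*PI)) = 0.
Proof. replace (INR l * (2*PI)) with (0 + 2 * INR l * PI) by ring. rewrite sin_period. apply sin_0. Qed.
Lemma cos_2lPI l : cos (INR l * (2*PI)) = 1.
Proof. replace (INR l * (2*PI)) with (0 + 2 * INR l * PI) by ring. rewrite cos_period. apply cos_0. Qed.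

Lemma int_cos l : (1 <= l)%nat -> RInt (fun t => cos (INR l * t)) 0 (2*PI) = 0.
Proof.
  intros Hl. assert (HL : 0 < INR l) by (apply lt_0_INR; lia).
  erewrite is_RInt_unique.
  2:{ apply (is_RInt_derive (fun t => sin (INR l * t) / INR l)).
  - intros x _. auto_derive; auto. field. lra.
  - intros x _. apply cder. intros; auto_derive; auto. }
  rewrite sin_2lPI, Rmult_0_r, sin_0. unfold minus, plus, opp; simpl. field. lra.
Qed.

Lemma int_sin l : RInt (fun t => sin (INR l * t)) 0 (2*PI) = 0.
Proof.
  destruct l as [|l].
  - rewrite (extR _ (fun _ => 0)) by (intros; rewrite Rmult_0_l; apply sin_0).
    rewrite RInt_const. unfold scal; simpl; unfold mult; simpl. ring.
  - assert (HL : 0 < INR (S l)) by (apply lt_0_INR; lia).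
    erewrite is_RInt_unique.
    2:{ apply (is_RInt_derive (fun t => - cos (INR (S l) * t) / INR (S l))).
    + intros x _. auto_derive; auto. foldINR. field. lra.
    + intros x _. apply cder. intros; auto_derive; auto. }
    rewrite cos_2lPI, Rmult_0_r, cos_0. unfold minus, plus, opp; simpl. ring.
Qed.

Definition h eps k t := exp (eps * cos (INR k * t)).

Lemma h_cont eps k t : continuous (h eps k) t.
Proof. apply cder. intros; unfold h; auto_derive; auto. Qed.

Lemma h_per eps k t : h eps k (t + 2*PI) = h eps k t.
Proof. unfold h. replace (INR k * (t + 2*PI)) with (INR k * t + 2 * INR k * PI) by ring. rewrite cos_period. auto. Qed.

Lemma h_refl eps k t : h eps k (2*PI - t) = h eps k t.
Proof. unfold h. replace (INR k * (2*PI - t)) with (- (INR k * t) + 2 * INR k * PI) by ring. rewrite cos_period, cos_neg. auto. Qed.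

Lemma h_rot eps k t : (1 <= k)%nat -> h eps k (t + 2*PI/INR k) = h eps k t.
Proof.
  intros Hk. assert (HK : 0 < INR k) by (apply lt_0_INR; lia).
  unfold h. replace (INR k * (t + 2*PI/INR k)) with (INR k * t + 2 * INR 1 * PI) by (simpl; field; lra).
  rewrite cos_period. auto.
Qed.

Lemma hsin eps k l : RInt (fun t => h eps k t * sin (INR l * t)) 0 (2*PI) = 0.
Proof.
  set (F := fun t => h eps k t * sin (INR l * t)).
  assert (HF : forall t, continuous F t).
  { intros t. apply cm. apply h_cont. apply cder. intros; auto_derive; auto. }
  assert (E := refl_int F HF).
  rewrite (extR _ (fun t => -1 * F t)) in E.
  2:{ intros t. unfold F. rewrite h_refl. replace (INR l * (2*PI - t)) with (- (INR l * t) + 2 * INR l * PI) by ring.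
      rewrite sin_period, sin_neg. ring. }
  rewrite scalR in E by auto. fold F. lra.
Qed.

Lemma cos_lt_1 x : 0 < x < 2*PI -> cos x < 1.
Proof.
  intros Hx. replace x with (2 * (x/2)) by field. rewrite cos_2a_sin.
  assert (0 < sin (x/2)) by (apply sin_gt_0; lra). nra.
Qed.

Lemma hcos eps k l : (1 <= l)%nat -> (l < k)%nat -> RInt (fun t => h eps k t * cos (INR l * t)) 0 (2*PI) = 0.
Proof.
  intros Hl Hlk.
  assert (HK : 0 < INR k) by (apply lt_0_INR; lia).
  assert (HL : 0 < INR l) by (apply lt_0_INR; lia).
  assert (HLK : INR l < INR k) by (apply lt_INR; lia).
  set (c := 2*PI/INR k).
  set (F := fun t => h eps k t * cos (INR l * t)).
  assert (HF : forall t, continuous F t).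
  { intros t. apply cm. apply h_cont. apply cder. intros; auto_derive; auto. }
  assert (Fp : forall t, F (t + 2*PI) = F t).
  { intros t. unfold F. rewrite h_per. replace (INR l * (t + 2*PI)) with (INR l * t + 2 * INR l * PI) by ring.
    rewrite cos_period. auto. }
  assert (E := shift_int F c HF Fp).
  rewrite (extR _ (fun t => cos (INR l * c) * F t + (- sin (INR l * c)) * (h eps k t * sin (INR l * t)))) in E.
  2:{ intros t. unfold F, c. rewrite h_rot by lia. replace (INR l * (t + 2*PI/INR k)) with (INR l * t + INR l * (2*PI/INR k)) by ring.
      rewrite cos_plus. ring. }
  rewrite plusR in E.
  2:{ intros; apply cm; [apply cc|auto]. }
  2:{ intros; apply cm; [apply cc|]. apply cm. apply h_cont. apply cder. intros; auto_derive; auto. }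
  rewrite scalR in E by auto. rewrite scalR in E.
  2:{ intros; apply cm. apply h_cont. apply cder. intros; auto_derive; auto. }
  rewrite hsin in E. fold F.
  assert (cos (INR l * c) < 1).
  { apply cos_lt_1. unfold c. pose proof PI_RGT_0. split.
    - apply Rmult_lt_0_compat; auto. apply Rdiv_lt_0_compat; lra.
    - replace (INR l * (2*PI/INR k)) with (2*PI * (INR l / INR k)) by (field; lra).
      assert (INR l / INR k < 1) by (apply Rmult_lt_reg_r with (INR k); auto; field_simplify; lra).
      nra. }
  nra.
Qed.


Definition Sset eps k (F : R -> R) := (forall t, continuous F t) /\
  RInt (fun t => h eps k t * F t) 0 (2*PI) = RInt (h eps k) 0 (2*PI) / (2*PI) * RInt F 0 (2*PI).

Lemma S_ext eps k F G : Sset eps k F -> (forall t, F t = G t) -> Sset eps k G.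
Proof. intros H E. assert (F = G) by (apply functional_extensionality; auto). subst. auto. Qed.

Lemma S_lin eps k F G a b : Sset eps k F -> Sset eps k G -> Sset eps k (fun t => a * F t + b * G t).
Proof.
  intros [HF EF] [HG EG]. split.
  - intros t. apply cp; apply cm; auto; apply cc.
  - rewrite (extR _ (fun t => a * (h eps k t * F t) + b * (h eps k t * G t))) by (intros; ring).
    assert (C1 : forall t, continuous (fun t => h eps k t * F t) t) by (intros; apply cm; auto; apply h_cont).
    assert (C2 : forall t, continuous (fun t => h eps k t * G t) t) by (intros; apply cm; auto; apply h_cont).
    rewrite plusR by (intros; apply cm; auto; apply cc).
    rewrite plusR by (intros; apply cm; auto; apply cc).
    rewrite !scalR by auto. rewrite EF, EG. toR; ring.
Qed.

Lemma S_zero eps k : Sset eps k (fun _ => 0).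
Proof.
  split. - intros; apply cc.
  - rewrite (extR _ (fun _ => 0)) by (intros; ring). rewrite RInt_const.
    unfold scal; simpl; unfold mult; simpl. ring.
Qed.

Lemma S_cos eps k l : (l < k)%nat -> Sset eps k (fun t => cos (INR l * t)).
Proof.
  intros Hl. split.
  - apply cder. intros; auto_derive; auto.
  - destruct l as [|l].
    + rewrite (extR (fun t => h eps k t * cos (INR 0 * t)) (h eps k)) by (intros; change (INR 0) with 0; rewrite Rmult_0_l, cos_0; ring).
      rewrite (extR (fun t => cos (INR 0 * t)) (fun _ => 1)) by (intros; change (INR 0) with 0; rewrite Rmult_0_l, cos_0; ring).
      rewrite RInt_const. unfold scal; simpl; unfold mult; simpl. assert (E: forall r : R, r = r / (2*PI) * ((2*PI - 0)*1)) by (intros; field; pose proof PI_RGT_0; lra). apply E.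
    + rewrite hcos by lia. rewrite int_cos by lia. toR; ring.
Qed.

Lemma S_sin eps k l : Sset eps k (fun t => sin (INR l * t)).
Proof.
  split.
  - apply cder. intros; auto_derive; auto.
  - rewrite hsin, int_sin. toR; ring.
Qed.

Lemma S_prod eps k : forall i j l, (l + i + j < k)%nat ->
  Sset eps k (fun t => cos (INR l * t) * cos t ^ i * sin t ^ j) /\
  Sset eps k (fun t => sin (INR l * t) * cos t ^ i * sin t ^ j).
Proof.
  induction i as [|i IHi].
  - induction j as [|j IHj]; intros l Hl.
    + split; [eapply S_ext; [apply (S_cos eps k l); lia|] | eapply S_ext; [apply (S_sin eps k l)|]]; intros; simpl; ring.
    + destruct l as [|l].
      * split.
        -- eapply S_ext; [apply (proj2 (IHj 1%nat ltac:(lia)))|]. intros t. simpl. rewrite Rmult_0_l, cos_0, Rmult_1_l. ring.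
        -- eapply S_ext; [apply S_zero|]. intros t. simpl. rewrite Rmult_0_l, sin_0. ring.
      * destruct (IHj (S (S l))) as [A1 A2]; [lia|].
        destruct (IHj l) as [B1 B2]; [lia|].
        split.
        -- eapply S_ext; [apply (S_lin _ _ _ _ (1/2) (-1/2) A2 B2)|]. intros t. cbv beta.
           replace (INR (S (S l)) * t) with (INR (S l) * t + t) by (rewrite (S_INR (S l)); ring).
           replace (INR l * t) with (INR (S l) * t - t) by (rewrite (S_INR l); ring).
           rewrite sin_plus, sin_minus. change (sin t ^ S j) with (sin t * sin t ^ j). field.
        -- eapply S_ext; [apply (S_lin _ _ _ _ (1/2) (-1/2) B1 A1)|]. intros t. cbv beta.
           replace (INR (S (S l)) * t) with (INR (S l) * t + t) by (rewrite (S_INR (S l)); ring).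
           replace (INR l * t) with (INR (S l) * t - t) by (rewrite (S_INR l); ring).
           rewrite cos_plus, cos_minus. change (sin t ^ S j) with (sin t * sin t ^ j). field.
  - intros j l Hl. destruct l as [|l].
    + split.
      * eapply S_ext; [apply (proj1 (IHi j 1%nat ltac:(lia)))|]. intros t. simpl. rewrite Rmult_0_l, cos_0, Rmult_1_l. ring.
      * eapply S_ext; [apply S_zero|]. intros t. simpl. rewrite Rmult_0_l, sin_0. ring.
    + destruct (IHi j (S (S l))) as [A1 A2]; [lia|].
      destruct (IHi j l) as [B1 B2]; [lia|].
      split.
      * eapply S_ext; [apply (S_lin _ _ _ _ (1/2) (1/2) A1 B1)|]. intros t. cbv beta.
        replace (INR (S (S l)) * t) with (INR (S l) * t + t) by (rewrite (S_INR (S l)); ring).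
        replace (INR l * t) with (INR (S l) * t - t) by (rewrite (S_INR l); ring).
        rewrite cos_plus, cos_minus. change (cos t ^ S i) with (cos t * cos t ^ i). field.
      * eapply S_ext; [apply (S_lin _ _ _ _ (1/2) (1/2) A2 B2)|]. intros t. cbv beta.
        replace (INR (S (S l)) * t) with (INR (S l) * t + t) by (rewrite (S_INR (S l)); ring).
        replace (INR l * t) with (INR (S l) * t - t) by (rewrite (S_INR l); ring).
        rewrite sin_plus, sin_minus. change (cos t ^ S i) with (cos t * cos t ^ i). field.
Qed.

Lemma S_sum eps k (F : nat -> R -> R) N : (forall n, (n <= N)%nat -> Sset eps k (F n)) ->
  Sset eps k (fun t => sum_f_R0 (fun n => F n t) N).
Proof.
  induction N; intros H.
  - simpl. apply H; lia.
  - eapply S_ext; [apply (S_lin _ _ _ _ 1 1 (IHN (fun n Hn => H n ltac:(lia))) (H (S N) ltac:(lia)))|].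
    intros t. simpl. ring.
Qed.

Lemma S_poly eps k m (c : nat -> nat -> R) : (m < k)%nat ->
  Sset eps k (fun t => sum_f_R0 (fun i => sum_f_R0 (fun j => c i j * cos t ^ i * sin t ^ j) (m - i)) m).
Proof.
  intros Hm. apply (S_sum eps k (fun i t => sum_f_R0 (fun j => c i j * cos t ^ i * sin t ^ j) (m - i))).
  intros i Hi. apply (S_sum eps k (fun j t => c i j * cos t ^ i * sin t ^ j)).
  intros j Hj. destruct (S_prod eps k i j 0 ltac:(lia)) as [A _].
  eapply S_ext; [apply (S_lin _ _ _ _ (c i j) 0 A A)|]. intros t. simpl. rewrite Rmult_0_l, cos_0. ring.
Qed.

Lemma PQ_cont n x y : continuity_2d_pt (P n) x y /\ continuity_2d_pt (Q n) x y.
Proof.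
  induction n as [|n [IH1 IH2]].
  - split; apply continuity_2d_pt_const.
  - split.
    + apply continuity_2d_pt_ext with (fun u v => u * P n u v - v * Q n u v); [intros; reflexivity|].
      apply continuity_2d_pt_minus; apply continuity_2d_pt_mult; auto.
      apply continuity_2d_pt_id1. apply continuity_2d_pt_id2.
    + apply continuity_2d_pt_ext with (fun u v => u * Q n u v + v * P n u v); [intros; reflexivity|].
      apply continuity_2d_pt_plus; apply continuity_2d_pt_mult; auto.
      apply continuity_2d_pt_id1. apply continuity_2d_pt_id2.
Qed.

Definition uu eps m := fun x y => eps * P (S m) x y.

Lemma dx_uu eps m x y : dx (uu eps m) x y = eps * (INR (S m) * P m x y).
Proof. unfold dx, uu. apply is_derive_unique. apply is_derive_scal. apply (PQ_deriv m x y). Qed.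
Lemma dy_uu eps m x y : dy (uu eps m) x y = eps * (-(INR (S m) * Q m x y)).
Proof. unfold dy, uu. apply is_derive_unique. apply is_derive_scal. apply (PQ_deriv m x y). Qed.

Lemma C1_uu eps m : C1_plane (uu eps m).
Proof.
  intros x y. split; [|split; [|split]].
  - eexists. apply is_derive_scal. apply (PQ_deriv m x y).
  - eexists. apply is_derive_scal. apply (PQ_deriv m x y).
  - apply continuity_2d_pt_ext with (fun u v => eps * (INR (S m) * P m u v)).
    { intros; symmetry; apply dx_uu. }
    apply continuity_2d_pt_mult. apply continuity_2d_pt_const.
    apply continuity_2d_pt_mult. apply continuity_2d_pt_const. apply PQ_cont.
  - apply continuity_2d_pt_ext with (fun u v => eps * (- (INR (S m) * Q m u v))).
    { intros; symmetry; apply dy_uu. }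
    apply continuity_2d_pt_mult. apply continuity_2d_pt_const.
    apply continuity_2d_pt_opp.
    apply continuity_2d_pt_mult. apply continuity_2d_pt_const. apply PQ_cont.
Qed.

Lemma dirichlet_uu eps m : dirichlet (uu eps m) = eps^2 * INR (S m) * PI.
Proof.
  unfold dirichlet, disk_int.
  set (c := eps^2 * INR (S m)^2).
  rewrite (extR _ (fun x => c * Phi m x)).
  2:{ intros x. rewrite <- inner. rewrite <- scalR.
      - apply extR. intros y. rewrite dx_uu, dy_uu. unfold c. rewrite <- PQ_norm. ring.
      - intros t. apply cpow. apply cp. apply cc. apply cpow, cid. }
  rewrite scalR by (apply Phi_cont). rewrite Phi_int. unfold c. rewrite S_INR. field.
  pose proof (pos_INR m). lra.
Qed.

Lemma circ_uu_h eps m t : exp (uu eps m (cos t) (sin t)) = h eps (S m) t.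
Proof. unfold uu, h. rewrite (proj1 (PQ_circ (S m) t)). auto. Qed.

Lemma bmean_uu eps m : bmean (uu eps m) = 0.
Proof.
  unfold bmean, circ_int.
  rewrite (extR _ (fun t => eps * cos (INR (S m) * t))).
  2:{ intros t. unfold uu. rewrite (proj1 (PQ_circ (S m) t)). auto. }
  rewrite scalR. rewrite int_cos by lia. ring.
  apply cder. intros; auto_derive; auto.
Qed.

Lemma constraint_uu eps m p : in_P0 m p -> circ_int (fun x y => exp (uu eps m x y) * p x y) = 0.
Proof.
  intros [[c Hc] H0]. unfold circ_int in *.
  destruct (S_poly eps (S m) m c ltac:(lia)) as [_ E].
  rewrite (extR _ (fun t => h eps (S m) t * sum_f_R0 (fun i => sum_f_R0 (fun j => c i j * cos t ^ i * sin t ^ j) (m - i)) m)).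
  2:{ intros t. rewrite circ_uu_h, Hc. auto. }
  rewrite E.
  rewrite (extR (fun t => sum_f_R0 (fun i => sum_f_R0 (fun j => c i j * cos t ^ i * sin t ^ j) (m - i)) m)
                (fun t => p (cos t) (sin t))) by (intros; rewrite Hc; auto).
  rewrite H0. toR; ring.
Qed.

Lemma circ_lower eps m : 0 < eps ->
  circ_int (fun x y => exp (uu eps m x y - bmean (uu eps m))) >= 2*PI*(1 + eps^2/4 - eps^3/6).
Proof.
  intros He. rewrite bmean_uu. unfold circ_int.
  rewrite (extR _ (h eps (S m))) by (intros; rewrite Rminus_0_r; apply circ_uu_h).
  set (K := INR (S m)).
  set (low := fun t => (1 - eps^3/6 + eps^2/4) + (eps * cos (K * t) + eps^2/4 * cos (INR (2 * S m) * t))).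
  assert (Cl : forall t, continuous low t).
  { apply cder. intros; unfold low; auto_derive; auto. }
  assert (Hle : RInt low 0 (2*PI) <= RInt (h eps (S m)) 0 (2*PI)).
  { apply RInt_le. pose proof PI_RGT_0; lra.
    apply exRI; auto. apply exRI; apply h_cont.
    intros t _. unfold low, h. fold K.
    rewrite mult_INR. replace (INR 2 * INR (S m) * t) with (2 * (K * t)) by (unfold K; simpl; ring).
    rewrite cos_2a_cos.
    set (c := cos (K * t)).
    assert (Hc : -1 <= c <= 1) by (unfold c; split; [apply COS_bound|apply COS_bound]).
    pose proof (exp3 (eps * c)).
    assert (eps * c + eps >= 0) by nra.
    assert ((eps*c)^3 + eps^3 >= 0).
    { replace ((eps*c)^3 + eps^3) with ((eps*c + eps) * ((eps*c - eps/2)^2 + 3*eps^2/4)) by field.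
      apply Rle_ge. apply Rmult_le_pos; nra. }
    nra. }
  assert (Ev : RInt low 0 (2*PI) = 2*PI*(1 + eps^2/4 - eps^3/6)).
  { unfold low. rewrite (plusR (fun _ => 1 - eps^3/6 + eps^2/4) (fun t => eps * cos (K * t) + eps^2/4 * cos (INR (2 * S m) * t)));
      [| intros; apply cc | apply cder; intros; auto_derive; auto].
    rewrite (plusR (fun t => eps * cos (K * t)) (fun t => eps^2/4 * cos (INR (2 * S m) * t))); [| apply cder; intros; auto_derive; auto | apply cder; intros; auto_derive; auto].
    rewrite (scalR (fun t => cos (K * t)) 0 (2*PI) eps) by (apply cder; intros; auto_derive; auto).
    rewrite (scalR (fun t => cos (INR (2 * S m) * t)) 0 (2*PI) (eps^2/4)) by (apply cder; intros; auto_derive; auto).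
    unfold K. rewrite !int_cos by lia. rewrite RInt_const. unfold scal; simpl; unfold mult; simpl. toR; ring. }
  lra.
Qed.

Lemma ln_lower x : 0 < x -> 1 - / x <= ln x.
Proof.
  intros Hx. pose proof (exp_ineq1_le (- ln x)). rewrite exp_Ropp, exp_ln in H by auto. lra.
Qed.

Theorem mainTheorem16 (m : nat) (a : R) (ha : 0 < a)
  (H : forall u : R -> R -> R, C1_plane u ->
       (forall p, in_P0 m p -> circ_int (fun x y => exp (u x y) * p x y) = 0) ->
       a * dirichlet u >=
         ln (/ (2 * PI) * circ_int (fun x y => exp (u x y - bmean u)))) :
  a >= / (4 * PI * (INR m + 1)).
Proof.
  apply Rnot_lt_ge. intro Hlt.
  pose proof PI_RGT_0 as Hpi. pose proof (pos_INR m) as Hm.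
  set (K := INR m + 1) in *.
  assert (HK : 0 < K) by (unfold K; lra).
  set (q := a * PI * K).
  assert (Hq0 : 0 < q) by (unfold q; apply Rmult_lt_0_compat; [apply Rmult_lt_0_compat|]; lra).
  assert (Hq : q < 1/4).
  { unfold q. apply Rmult_lt_compat_r with (r := 4 * PI * K) in Hlt; [|apply Rmult_lt_0_compat; lra].
    rewrite Rinv_l in Hlt by (apply Rgt_not_eq, Rmult_lt_0_compat; lra). nra. }
  set (d := 1/4 - q).
  set (eps := Rmin 1 d / 2).
  assert (He0 : 0 < eps) by (unfold eps, Rmin; destruct (Rle_dec 1 d); unfold d; lra).
  assert (He1 : eps <= 1/2) by (unfold eps, Rmin; destruct (Rle_dec 1 d); lra).
  assert (He2 : eps <= d/2) by (unfold eps, Rmin; destruct (Rle_dec 1 d); lra).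
  specialize (H (uu eps m) (C1_uu eps m) (fun p Hp => constraint_uu eps m p Hp)).
  rewrite dirichlet_uu in H. rewrite S_INR in H. fold K in H.
  pose proof (circ_lower eps m He0) as L.
  set (Y := circ_int (fun x y => exp (uu eps m x y - bmean (uu eps m)))) in *.
  set (y := eps^2/4 - eps^3/6).
  assert (Hy : eps^2/6 <= y) by (unfold y; nra).
  assert (Hy2 : y <= eps^2/4) by (unfold y; nra).
  assert (HX : 1 + y <= / (2*PI) * Y).
  { apply Rmult_le_reg_l with (2*PI). lra. rewrite <- Rmult_assoc, Rinv_r by lra. unfold y; lra. }
  assert (Hx0 : 0 < / (2*PI) * Y) by nra.
  pose proof (ln_lower _ Hx0) as Hl.
  assert (Hinv : / (/ (2*PI) * Y) <= / (1 + y)) by (apply Rinv_le_contravar; nra).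
  assert (Main : y / (1 + y) <= q * eps^2).
  { unfold q. replace (y / (1+y)) with (1 - / (1+y)) by (field; nra). nra. }
  assert (M2 : y <= q * eps^2 * (1 + y)).
  { apply Rmult_le_compat_r with (r := 1 + y) in Main; [|nra]. 
    replace (y / (1+y) * (1+y)) with y in Main by (field; nra). lra. }
  assert (M3 : 1/4 - eps/6 <= q * (1 + y)).
  { assert (eps^2 * (1/4 - eps/6) <= eps^2 * (q * (1+y))) by (unfold y in *; nra).
    apply Rmult_le_reg_l with (eps^2); nra. }
  assert (q * y <= eps/32) by nra.
  unfold d in *. nra.
Qed.
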